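(* Let $n\ge 2$ and let $k_1,\dots,k_n$, $a_1,\dots,a_{n-1}$, $b_1,\dots,b_n$ be real or complex numbers ($3n-1$ parameters). Let $A_2$ be the $n\times n$ matrix with entries $$(A_2)_{ij}=\begin{cases} k_j b_j, & i\le j,\\ k_i a_j, & i>j.\end{cases}$$ Define $c_i=k_ib_i-k_{i+1}a_i$ for $i=1,\dots,n-1$, $c_0=1$, $c_n=b_n$; $d_i=k_ia_{i+1}b_i-k_{i+1}a_ib_{i+1}$ for $i=1,\dots,n-2$, $d_0=a_1$; $f_i=a_i-b_i$ for $i=2,\dots,n-1$; $g_i=k_i-k_{i+1}$ for $i=2,\dots,n-1$, $g_n=1$. Assume $k_n\neq 0$ and $c_i\neq 0$ for $i=1,\dots,n$. Then $A_2$ is invertible and its inverse $A_2^{-1}=[\alpha_{ij}]$ is the lower Hessenberg matrix with entries $$\alpha_{ij}=\begin{cases} \dfrac{k_{i-1}b_{i-1}-k_{i+1}a_{i-1}}{c_{i-1}c_i}, & i=j,\ i\neq 1,n,\\[2mm] \dfrac{1}{c_1}, & i=j=1,\\[2mm] \dfrac{k_{n-1}b_{n-1}}{k_nc_{n-1}c_n}, & i=j=n,\\[2mm] (-1)^{i+j}\dfrac{d_{j-1}\,g_i\prod_{\nu=j+1}^{i-1}k_\nu f_\nu}{\prod_{\nu=j-1}^{i}c_\nu}, & i-j\ge 1,\\[2mm] -\dfrac{1}{c_i}, & j-i=1,\\[2mm] 0, & j-i>1, \end{cases}$$ where the empty product $\prod_{\nu=j+1}^{i-1}k_\nu f_\nu$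 (case $i=j+1$) is taken to be $1$.
   Context: A lower Hessenberg matrix is a square matrix whose entries $(i,j)$ vanish whenever $j-i>1$. *)

(* Defs.v *)
From HB Require Import structures.
From mathcomp Require Import all_boot all_order all_algebra.
Set Implicit Arguments. Unset Strict Implicit. Unset Printing Implicit Defensive.
Import Order.TTheory GRing.Theory Num.Theory.
Local Open Scope ring_scope.

(* Parameters k_1..k_n, a_1..a_{n-1}, b_1..b_n are given as functions
   nat -> R indexed 1-based (as in the paper); values outside the relevant
   index ranges are never used. *)

Section Hess.
Variables (R : numFieldType) (n : nat) (k a b : nat -> R).

Definition A2 : 'M[R]_n :=
  \matrix_(i < n, j < n)
    if (i <= j)%N then k j.+1 * b j.+1 else k i.+1 * a j.+1.

Definition cc (i : nat) : R :=
  if i == 0%N then 1 else if i == n then b n else k i * b i - k i.+1 * a i.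

Definition dd (i : nat) : R :=
  if i == 0%N then a 1%N else k i * a i.+1 * b i - k i.+1 * a i * b i.+1.

Definition ff (i : nat) : R := a i - b i.

Definition gg (i : nat) : R := if i == n then 1 else k i - k i.+1.

Definition alpha (i j : nat) : R :=
  if i == j then
    if i == 1%N then (cc 1)^-1
    else if i == n then k n.-1 * b n.-1 / (k n * cc n.-1 * cc n)
    else (k i.-1 * b i.-1 - k i.+1 * a i.-1) / (cc i.-1 * cc i)
  else if (j < i)%N then
    (-1) ^+ (i + j) * dd j.-1 * gg i * (\prod_(j.+1 <= v < i) (k v * ff v))
      / (\prod_(j.-1 <= v < i.+1) cc v)
  else if j == i.+1 then - (cc i)^-1
  else 0.

Definition alphaM : 'M[R]_n := \matrix_(i < n, j < n) alpha i.+1 j.+1.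

End Hess.

(* Main.v *)
Require Import Defs.
From HB Require Import structures.
From mathcomp Require Import all_boot all_order all_algebra.
From mathcomp Require Import ring.
Import Order.TTheory GRing.Theory Num.Theory.
Local Open Scope ring_scope.

Section Proof.
Variables (R : numFieldType) (n : nat) (k a b : nat -> R).
Hypothesis n2 : (2 <= n)%N.
Hypothesis kn0 : k n != 0.
Hypothesis cnz : forall i : nat, (1 <= i <= n)%N -> cc n k a b i != 0.

Local Notation c := (cc n k a b).
Local Notation g := (gg n k).
Local Notation d := (dd k a b).
Local Notation al := (alpha n k a b).

Definition beta (i j : nat) : R :=
  (-1) ^+ (i + j) * d j.-1 * (\prod_(j.+1 <= v < i) (k v * ff a b v))
      / (\prod_(j.-1 <= v < i.+1) c v).

Lemma c0 : c 0 = 1. Proof. by []. Qed.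
Lemma cn : c n = b n. Proof. by rewrite /cc eqxx; case: n n2. Qed.
Lemma cE i : (0 < i < n)%N -> c i = k i * b i - k i.+1 * a i.
Proof. by case/andP=> h1 h2; rewrite /cc (gtn_eqF h1) (ltn_eqF h2). Qed.
Lemma gE i : i != n -> g i = k i - k i.+1.
Proof. by rewrite /gg => /negbTE->. Qed.
Lemma gn : g n = 1. Proof. by rewrite /gg eqxx. Qed.

Lemma al_low i j : (j < i)%N -> al i j = g i * beta i j.
Proof.
move=> h; rewrite /alpha (gtn_eqF h) h /beta; ring.
Qed.
Lemma al_sup i : al i i.+1 = - (c i)^-1.
Proof. by rewrite /alpha (ltn_eqF (ltnSn i)) ltnNge leqnSn eqxx. Qed.
Lemma al_zero i j : (i.+1 < j)%N -> al i j = 0.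
Proof.
move=> h; rewrite /alpha.
have hij : (i < j)%N by apply: ltn_trans h.
rewrite (ltn_eqF hij) ltnNge (ltnW hij) /= (gtn_eqF h) //.
Qed.
Lemma al11 : al 1 1 = (c 1)^-1. Proof. by rewrite /alpha eqxx. Qed.
Lemma alnn : al n n = k n.-1 * b n.-1 / (k n * c n.-1 * c n).
Proof. by rewrite /alpha eqxx; case: n n2 => [|[|m]]. Qed.
Lemma aldiag i : (1 < i < n)%N ->
  al i i = (k i.-1 * b i.-1 - k i.+1 * a i.-1) / (c i.-1 * c i).
Proof.
case/andP=> h1 h2; rewrite /alpha eqxx (gtn_eqF h1) (ltn_eqF h2) //.
Qed.

Definition Aent (i l : nat) : R := if (i <= l)%N then k l * b l else k i * a l.
Definition Row (i j : nat) : R := \sum_(1 <= l < n.+1) Aent i l * al l j.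
Definition S (i j : nat) : R := \sum_(1 <= l < i) a l * al l j.
Definition U (i j : nat) : R := \sum_(i <= l < n.+1) k l * b l * al l j.

Lemma RowE i j : (1 <= i <= n)%N -> Row i j = U i j + k i * S i j.
Proof.
case/andP=> h1 h2; rewrite /Row (@big_cat_nat _ _ _ i) ?(leqW h2) //= addrC.
congr (_ + _).
  by apply: eq_big_nat => l /andP[hl _]; rewrite /Aent hl.
rewrite /S mulr_sumr; apply: eq_big_nat => l /andP[_ hl].
by rewrite /Aent leqNgt hl /= mulrA.
Qed.

Lemma US i j : (i <= n)%N -> U i j = k i * b i * al i j + U i.+1 j.
Proof. by move=> h; rewrite /U big_ltn. Qed.

Lemma SS i j : (1 <= i)%N -> S i.+1 j = S i j + a i * al i j.
Proof. by move=> h; rewrite /S big_nat_recr. Qed.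

Lemma Un1 j : U n.+1 j = 0. Proof. by rewrite /U big_geq. Qed.

Lemma Rowdiff i j : (1 <= i < n)%N ->
  Row i j - Row i.+1 j = c i * al i j + g i * S i j.
Proof.
case/andP=> h1 h2.
rewrite RowE ?h1 ?(ltnW h2) // RowE ?h2 // US ?(ltnW h2) // SS //.
rewrite cE ?h2 ?(leq_trans _ h1) // gE ?(ltn_eqF h2) //; ring.
Qed.

Lemma Rown j : Row n j = k n * b n * al n j + k n * S n j.
Proof.
by rewrite RowE ?leqnn ?(leq_trans _ n2) // US // Un1 addr0.
Qed.


Lemma cnz' i : (0 < i <= n)%N -> c i != 0. Proof. exact: cnz. Qed.

Lemma S_zero i j : (i < j)%N -> S i j = 0.
Proof.
move=> h; rewrite /S big_nat big1 // => l /andP[_ hl].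
by rewrite al_zero ?mulr0 // (leq_ltn_trans hl).
Qed.

Lemma S_diag m : (0 < m)%N -> S m.+1 m.+1 = - a m / c m.
Proof.
by move=> h; rewrite SS // S_zero // add0r al_sup mulrN mulNr.
Qed.

Lemma beta_rec i j : (j < i)%N -> beta i.+1 j = - beta i j * (k i * ff a b i) / c i.+1.
Proof.
move=> h; rewrite /beta.
rewrite (@big_nat_recr _ _ _ i j.+1) //.
rewrite (@big_nat_recr _ _ _ i.+1 j.-1) /=; last first.
  by apply: leq_trans (leq_pred _) _; apply: leq_trans (ltnW h) _.
rewrite addSn exprS invfM; ring.
Qed.

Lemma S_base j : (1 <= j)%N -> (j < n)%N -> S j.+1 j = - c j.+1 * beta j.+1 j.
Proof.
move=> h1 h2.
have c1 : c j.+1 != 0 by apply: cnz'; rewrite h2.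
have c2 : c j != 0 by apply: cnz'; rewrite h1 ltnW.
have sg : (-1) ^+ (j.+1 + j) = - 1 :> R.
  by rewrite -signr_odd addSn addnn /= odd_double.
rewrite /beta sg big_geq // mulr1.
case: j h1 h2 c1 c2 sg => [//|m] _ h2 c1 c2 sg /=.
rewrite (@big_ltn _ _ _ m) ?(leqW (leqW (leqnn _))) // (@big_ltn _ _ _ m.+1) ?(leqW (leqnn _)) // big_ltn // big_geq // mulr1.
case: m h2 c1 c2 sg => [|m] h2 c1 c2 sg.
  rewrite SS // /S big_geq // add0r al11 /dd /=.
  rewrite c0; field; rewrite c1 c2 //.
rewrite SS // S_diag // aldiag; last by rewrite h2.
have c3 : c m.+1 != 0 by apply: cnz'; rewrite /= ltnW // ltnW.
rewrite /dd /=.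
have e2 : c m.+2 = k m.+2 * b m.+2 - k m.+3 * a m.+2 by rewrite cE // ltnW.
rewrite e2 in c2 *.
field; rewrite c1 c2 c3 //.
Qed.


Lemma S_low t j : (1 <= j)%N -> (j.+1 + t <= n)%N ->
  S (j.+1 + t) j = - c (j.+1 + t) * beta (j.+1 + t) j.
Proof.
move=> h1; elim: t => [|t IH] h2.
  by rewrite addn0 S_base //; rewrite addn0 in h2.
rewrite addnS in h2 *.
have hji : (j < j.+1 + t)%N by rewrite addSn ltnS leq_addr.
move: (j.+1 + t)%N IH h2 hji => i IH h2 hji.
have hi1 : (1 <= i)%N by apply: leq_trans hji.
rewrite SS // (IH (ltnW h2)) al_low // beta_rec //.
have ci : c i.+1 != 0 by apply: cnz'; rewrite h2.
rewrite /ff gE ?(ltn_eqF h2) // cE ?hi1 //.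
field; rewrite ci //.
Qed.

Lemma S_lowP i j : (1 <= j)%N -> (j < i <= n)%N -> S i j = - c i * beta i j.
Proof.
move=> h1 /andP[h2 h3].
have := @S_low (i - j.+1) j h1; rewrite subnKC //; exact.
Qed.

Lemma Dval i j : (1 <= i < n)%N -> (1 <= j <= n)%N ->
  c i * al i j + g i * S i j = (i == j)%:R - (i.+1 == j)%:R.
Proof.
case/andP=> hi1 hin /andP[hj1 hjn].
have ci : c i != 0 by apply: cnz'; rewrite hi1 (ltnW hin).
case: (ltngtP i j) => hij.
- rewrite S_zero // mulr0 addr0.
  case: (ltngtP i.+1 j) => h.
  + by rewrite al_zero // mulr0 ?(ltn_eqF h) ?(ltn_eqF hij) subrr.
  + by move: h; rewrite ltnS leqNgt hij.
  + by rewrite -h al_sup mulrN divff // sub0r.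
- rewrite al_low // S_lowP // ?hij ?(ltnW hin) //.
  rewrite (gtn_eqF (ltn_trans hij (ltnSn i))) subrr; ring.
  rewrite -hij (gtn_eqF (ltnSn i)) subr0.
  case: i hi1 hin ci hij => [//|[|m]] _ hin ci hij.
    by rewrite al11 /S big_geq // mulr0 addr0 divff.
  rewrite S_diag // aldiag ?hin //.
  have cm : c m.+1 != 0 by apply: cnz'; rewrite /= ltnW // ltnW.
  rewrite gE ?(ltn_eqF hin) //.
  have e2 : c m.+2 = k m.+2 * b m.+2 - k m.+3 * a m.+2 by rewrite cE //= hin.
  have e1 : c m.+1 = k m.+1 * b m.+1 - k m.+2 * a m.+1 by rewrite cE //= (ltnW hin).
  rewrite e2 in ci *; rewrite /=.
  rewrite e1 in cm *.
  field; rewrite ci cm //.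
Qed.

Lemma Row_top j : (1 <= j <= n)%N -> Row n j = (n == j)%:R.
Proof.
case/andP=> hj1 hjn; rewrite Rown.
have n1 : (0 < n)%N by apply: ltnW.
case: (ltngtP j n) => h.
- rewrite al_low // gn mul1r S_lowP ?h ?leqnn // cn /=; ring.
- by move: h; rewrite ltnNge hjn.
- have hm0 : (0 < n.-1)%N by rewrite -ltnS prednK.
  have Sn : S n n = - a n.-1 / c n.-1.
    by have := @S_diag _ hm0; rewrite prednK.
  rewrite h alnn Sn.
  have hm : (0 < n.-1 < n)%N by rewrite hm0 ltn_predL.
  have cm : c n.-1 != 0 by apply: cnz'; rewrite hm0 leq_pred.
  rewrite cE // prednK // in cm *.
  rewrite cn.
  have bn : b n != 0 by rewrite -cn cnz' // leqnn n1.
  rewrite /=; field; rewrite cm kn0 bn //.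
Qed.

Lemma Row_val j : (1 <= j <= n)%N -> forall t, (t < n)%N -> Row (n - t)%N j = ((n - t)%N == j)%:R.
Proof.
move=> hj; elim=> [|t IH] ht.
  by rewrite subn0 Row_top.
have hi : (1 <= n - t.+1 < n)%N.
  by rewrite subn_gt0 ht /= -{2}(subn0 n) ltn_sub2l // ltnW.
have e : (n - t.+1).+1 = (n - t)%N by rewrite subnSK // (ltnW ht).
rewrite -[Row (n - t.+1) j](subrK (Row (n - t.+1).+1 j)) Rowdiff // Dval //.
rewrite e IH ?(ltnW ht) //; ring.
Qed.

Lemma Row_all i j : (1 <= i <= n)%N -> (1 <= j <= n)%N -> Row i j = (i == j)%:R.
Proof.
case/andP=> hi1 hin hj.
have := @Row_val j hj (n - i); rewrite subKn //; apply.
by rewrite -{2}(subn0 n) ltn_sub2l // (leq_trans _ hin).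
Qed.

Lemma prod1 : A2 n k a b *m alphaM n k a b = 1%:M.
Proof.
apply/matrixP => i j; rewrite !mxE.
have -> : \sum_(l < n) A2 n k a b i l * alphaM n k a b l j = Row i.+1 j.+1.
  rewrite /Row big_add1 /= big_mkord.
  by apply: eq_bigr => l _; rewrite !mxE /Aent ltnS.
by rewrite Row_all ?ltn_ord // eqSS.
Qed.
End Proof.

Theorem mainTheorem3 (R : numFieldType) (n : nat) (k a b : nat -> R) :
  (2 <= n)%N ->
  k n != 0 ->
  (forall i : nat, (1 <= i <= n)%N -> cc n k a b i != 0) ->
  A2 n k a b \in unitmx /\ invmx (A2 n k a b) = alphaM n k a b.
Proof.
move=> n2 kn0 cnz.
have P := @prod1 R n k a b n2 kn0 cnz.
have [uA _] := mulmx1_unit P.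
split => //.
by rewrite -(mulKmx uA (alphaM n k a b)) P mulmx1.
Qed.
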